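(* Let $n \geq 3$ be an integer and let $D_{2n} = \langle a, b \mid a^n = b^2 = e,\ ab = ba^{-1} \rangle$ be the dihedral group of order $2n$. Then the order supergraph $\mathcal{S}(D_{2n})$ is cyclically separable if and only if all of the following hold: (i) $n$ is not a power of $2$; (ii) $n \geq 5$; (iii) $n \neq 6$ and $n \neq 12$.
   Context: All graphs are simple and undirected. For a finite group $G$, the order supergraph $\mathcal{S}(G)$ is the graph with vertex set $G$ in which two distinct vertices $x,y$ are adjacent if and only if the order of $x$ divides the order of $y$ or the order of $y$ divides the order of $x$. For a graph $\Gamma$, a vertex cutset is a set $S$ of vertices such that $\Gamma - S$ is disconnected; a cyclic vertex cutset is a vertex cutset $S$ such that $\Gamma - S$ has at least two connected components each of which contains a cycle. $\Gamma$ is called cyclically separable if it has a cyclic vertex cutset. *)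

(* Defs.v *)
From mathcomp Require Import all_boot all_fingroup all_solvable.
Set Implicit Arguments.
Unset Strict Implicit.
Unset Printing Implicit Defensive.

(* A simple undirected graph on a finite type T: a symmetric irreflexive
   boolean relation [adj].  The vertex set is the whole type T. *)

Definition del_rel (T : finType) (adj : rel T) (S : {set T}) : rel T :=
  [rel x y | [&& x \notin S, y \notin S & adj x y]].

Definition is_graph_cycle (T : finType) (adj : rel T) (c : seq T) : bool :=
  [&& 3 <= size c, uniq c & path.cycle adj c].

Definition comp_has_cycle (T : finType) (adj : rel T) (x : T) : Prop :=
  exists c : seq T, is_graph_cycle adj c /\ all (connect adj x) c.

(* S is a cyclic vertex cutset: Gamma - S has (at least) two distinct
   connected components each of which contains a cycle.  (This forces
   Gamma - S to be disconnected, i.e. S is a vertex cutset.) *)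
Definition cyclic_vertex_cutset (T : finType) (adj : rel T) (S : {set T}) : Prop :=
  exists x y : T, [/\ x \notin S, y \notin S,
    ~~ connect (del_rel adj S) x y,
    comp_has_cycle (del_rel adj S) x & comp_has_cycle (del_rel adj S) y].

Definition cyclically_separable (T : finType) (adj : rel T) : Prop :=
  exists S : {set T}, cyclic_vertex_cutset adj S.

Definition order_supergraph (gT : finGroupType) : rel gT :=
  [rel x y | (x != y) && ((#[x]%g %| #[y]%g) || (#[y]%g %| #[x]%g))].

(* Main.v *)
Require Import Defs.
From mathcomp Require Import all_boot all_fingroup all_solvable.
Set Implicit Arguments. Unset Strict Implicit. Unset Printing Implicit Defensive.

Section Graph.
Variable gT : finGroupType.
Local Notation adj := (@order_supergraph gT).

Lemma adj_sym : symmetric adj.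
Proof. by move=> u v; rewrite /order_supergraph /= eq_sym orbC. Qed.

Lemma del_sym (S : {set gT}) : symmetric (del_rel adj S).
Proof. by move=> u v; rewrite /del_rel /= adj_sym andbCA. Qed.

Lemma del_notin (S : {set gT}) (u v : gT) : connect (del_rel adj S) u v -> u \notin S -> v \notin S.
Proof.
case/connectP=> p; elim: p u => [|w p IH] u /=; first by move=> _ ->.
by case/andP=> /and3P[_ wS _] pw vl _; apply: (IH w).
Qed.

Lemma conn_cmp (S : {set gT}) (u v : gT) : u \notin S -> v \notin S -> u != v ->
  (#[u]%g %| #[v]%g) || (#[v]%g %| #[u]%g) -> connect (del_rel adj S) u v.
Proof. by move=> uS vS uv d; apply: connect1; rewrite /del_rel /order_supergraph /= uS vS uv d. Qed.

Lemma tri_cycle (S : {set gT}) (c1 c2 c3 : gT) :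
  adj c1 c2 -> adj c2 c3 -> adj c3 c1 ->
  c1 \notin S -> c2 \notin S -> c3 \notin S ->
  comp_has_cycle (del_rel adj S) c1.
Proof.
move=> e1 e2 e3 s1 s2 s3.
have d1 u v : u \notin S -> v \notin S -> adj u v -> del_rel adj S u v.
  by move=> su sv e; rewrite /del_rel /= su sv.
exists [:: c1; c2; c3]; split.
  rewrite /is_graph_cycle /= !inE negb_or.
  move: (e1) (e2) (e3) => /andP[-> _] /andP[-> _] /andP[h _]; rewrite eq_sym h /=.
  by rewrite !d1.
by rewrite /= connect0 !connect1 // d1 // adj_sym.
Qed.

Lemma sep_crit (P Q : pred nat) (a1 a2 a3 b1 b2 b3 : gT) :
  (forall p q, P p -> Q q -> ~~ (p %| q) && ~~ (q %| p)) ->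
  P #[a1]%g -> P #[a2]%g -> P #[a3]%g -> Q #[b1]%g -> Q #[b2]%g -> Q #[b3]%g ->
  adj a1 a2 -> adj a2 a3 -> adj a3 a1 -> adj b1 b2 -> adj b2 b3 -> adj b3 b1 ->
  cyclically_separable adj.
Proof.
move=> hPQ Pa1 Pa2 Pa3 Qb1 Qb2 Qb3 e1 e2 e3 f1 f2 f3.
pose S := [set v : gT | ~~ P #[v]%g && ~~ Q #[v]%g].
have nS v : P #[v]%g || Q #[v]%g -> v \notin S by rewrite inE negb_and !negbK.
exists S, a1, b1; split.
- by apply: nS; rewrite Pa1.
- by apply: nS; rewrite Qb1 orbT.
- apply/negP => /connectP [p pth eb].
  move: (a1) (Pa1) pth eb.
  elim: p => [|w p IH] u /= Pu; first by move=> _ eb; move: (hPQ _ _ Pu Qb1); rewrite -eb dvdnn.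
  case/andP=> /and3P[_ wS euw] pw lw; apply: (IH w) => //.
  move: wS; rewrite inE negb_and !negbK; case/orP=> // Qw.
  by move: (hPQ _ _ Pu Qw) euw => /andP[h1 h2] /= /andP[_]; rewrite (negPf h1) (negPf h2).
- by apply: (tri_cycle e1 e2 e3); apply: nS; rewrite ?Pa1 ?Pa2 ?Pa3.
- by apply: (tri_cycle f1 f2 f3); apply: nS; rewrite ?Qb1 ?Qb2 ?Qb3 orbT.
Qed.
Definition incmp (p q : nat) := ~~ (p %| q) && ~~ (q %| p).

Lemma sep_pairs : cyclically_separable adj ->
  exists a1 a2 a3 b1 b2 b3 : gT,
    [/\ uniq [:: a1; a2; a3], uniq [:: b1; b2; b3] &
      forall a b, a \in [:: a1; a2; a3] -> b \in [:: b1; b2; b3] ->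
        incmp #[a]%g #[b]%g].
Proof.
case=> S [x [y [xS yS nxy [cx [cyx allx]] [cy [cyy ally]]]]].
have csym := sym_connect_sym (del_sym S).
have key a b : a \in cx -> b \in cy -> incmp #[a]%g #[b]%g.
  move=> ax bx; have xa := allP allx a ax; have yb := allP ally b bx.
  apply/negP => /negP cmp; case/negP: nxy.
  have yb' : connect (del_rel adj S) b y by rewrite csym.
  case: (boolP (a == b)) => [/eqP eab|neab].
    by rewrite -eab in yb'; exact: connect_trans xa yb'.
  have aS := del_notin xa xS; have bS := del_notin yb yS.
  apply: connect_trans xa (connect_trans _ yb').
  apply: conn_cmp => //.
  by move: cmp; rewrite /incmp negb_and !negbK.
clear allx ally; move: cyx cyy key => /and3P[sx ux _] /and3P[sy uy _].
case: cx sx ux => [|a1 [|a2 [|a3 cx]]] // _ ux.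
case: cy sy uy => [|b1 [|b2 [|b3 cy]]] // _ uy key.
exists a1, a2, a3, b1, b2, b3; split.
- by move: ux; rewrite -[a1 :: _]/([:: a1; a2; a3] ++ cx) cat_uniq => /and3P[].
- by move: uy; rewrite -[b1 :: _]/([:: b1; b2; b3] ++ cy) cat_uniq => /and3P[].
move=> a b ha hb; apply: key.
  by rewrite -[a1 :: _]/([:: a1; a2; a3] ++ cx) mem_cat ha.
by rewrite -[b1 :: _]/([:: b1; b2; b3] ++ cy) mem_cat hb.
Qed.

End Graph.

Local Open Scope group_scope.
Section Dih.
Variables (gT : finGroupType) (x y : gT) (n : nat).
Hypotheses (n_gt2 : 2 < n) (ox : #[x] = n) (oy : #[y] = 2) (xy : x ^ y = x^-1)
  (notXy : y \notin <[x]>) (defG : <[x]> * <[y]> = [set: gT]).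

Lemma y2 : y ^+ 2 = 1. Proof. by rewrite -oy expg_order. Qed.
Lemma yV : y^-1 = y.
Proof. by apply/eqP; rewrite eq_invg_mul -(expgS y 1) y2. Qed.

Lemma refl_ord u : u \in <[x]> -> #[u * y] = 2.
Proof.
case/cycleP=> i ->; apply: nt_prime_order => //.
  have cj : y * x ^+ i * y = (x ^+ i)^-1.
    by rewrite -{1}yV -mulgA -conjgE conjXg xy expgVn.
  by rewrite expgS expg1 -mulgA (mulgA y) cj mulgV.
apply: contra notXy => /eqP h; rewrite -(mulKg (x ^+ i) y) h mulg1.
by rewrite groupV mem_cycle.
Qed.

Lemma elt_cases g : g \in <[x]> \/ exists2 u, u \in <[x]> & g = u * y.
Proof.
have : g \in <[x]> * <[y]> by rewrite defG inE.
case/mulsgP=> u v xu /cycleP[i ->] ->.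
rewrite -expg_mod_order oy.
have : i %% 2 < 2 by rewrite ltn_mod.
case: (i %% 2) => [|[|//]] _; first by left; rewrite expg0 mulg1.
by right; exists u; rewrite ?expg1.
Qed.

Lemma ord_cases g : g \in <[x]> \/ #[g] = 2.
Proof. by case: (elt_cases g) => [|[u xu ->]]; [left | right; apply: refl_ord]. Qed.

Lemma ord_dvd g : g \in <[x]> -> #[g] %| n.
Proof. by move=> xg; rewrite -ox orderE orderE cardSg // cycle_subG. Qed.

Lemma count3 d (a1 a2 a3 : gT) : 2 < d -> totient d < 3 ->
  #[a1] = d -> #[a2] = d -> #[a3] = d -> ~~ uniq [:: a1; a2; a3].
Proof.
move=> d2 td o1 o2 o3; apply/negP => u.
have inx a : #[a] = d -> a \in <[x]>.
  by move=> oa; case: (ord_cases a) => // h; move: d2; rewrite -oa h.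
have gen a : #[a] = d -> generator <[a1]> a.
  move=> oa; rewrite /generator (eq_subG_cyclic (cycle_cyclic x)) ?cycle_subG ?inx //.
  by rewrite -!orderE o1 oa.
have := uniq_leq_size u (s2 := enum [set v | generator <[a1]> v]).
rewrite -cardE -totient_gen o1 /= => h; move: td; rewrite ltnNge h //.
by move=> v; rewrite mem_enum inE !inE => /or3P[] /eqP ->; apply: gen.
Qed.

Local Notation adj := (@order_supergraph gT).

Definition D12 := [seq d <- iota 0 13 | d %| 12].
Definition same34 (o1 o2 o3 : nat) := [&& o1 == o2, o2 == o3 & (o1 == 3) || (o1 == 4)].

Lemma fin12_bool : all (fun o1 => all (fun o2 => all (fun o3 =>
  all (fun p1 => all (fun p2 => all (fun p3 =>
   all (fun o => all (incmp o) [:: p1; p2; p3]) [:: o1; o2; o3]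
   ==> same34 o1 o2 o3 || same34 p1 p2 p3) D12) D12) D12) D12) D12) D12.
Proof. by vm_compute. Qed.

Lemma not_sep12 : n %| 12 -> ~ cyclically_separable adj.
Proof.
move=> n12 /sep_pairs [a1 [a2 [a3 [b1 [b2 [b3 [ua ub inc]]]]]]].
have dD (g : gT) : #[g] \in D12.
  rewrite mem_filter mem_iota /=.
  have h : #[g] %| 12.
    by case: (ord_cases g) => [/ord_dvd h | ->] //; exact: dvdn_trans h n12.
  by rewrite h /= ltnS dvdn_leq.
have := fin12_bool; move=> /allP/(_ _ (dD a1))/allP/(_ _ (dD a2))/allP/(_ _ (dD a3)).
move=> /allP/(_ _ (dD b1))/allP/(_ _ (dD b2))/allP/(_ _ (dD b3))/implyP.
case/(_ _)/orP.
  apply/allP => o; rewrite !inE => /or3P[]/eqP->; apply/allP => p;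
  rewrite !inE => /or3P[]/eqP->; apply: inc; rewrite !inE eqxx ?orbT //.
- case/and3P=> /eqP e12 /eqP e23 /orP[]/eqP o3.
    by case/negP: (count3 (d := 3) (a1:=a1) (a2:=a2) (a3:=a3) isT isT o3 (etrans (esym e12) o3) (etrans (esym e23) (etrans (esym e12) o3))).
  by case/negP: (count3 (d := 4) (a1:=a1) (a2:=a2) (a3:=a3) isT isT o3 (etrans (esym e12) o3) (etrans (esym e23) (etrans (esym e12) o3))).
- case/and3P=> /eqP e12 /eqP e23 /orP[]/eqP o3.
    by case/negP: (count3 (d := 3) (a1:=b1) (a2:=b2) (a3:=b3) isT isT o3 (etrans (esym e12) o3) (etrans (esym e23) (etrans (esym e12) o3))).
  by case/negP: (count3 (d := 4) (a1:=b1) (a2:=b2) (a3:=b3) isT isT o3 (etrans (esym e12) o3) (etrans (esym e23) (etrans (esym e12) o3))).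
Qed.

Lemma not_sep2 k : #|[set: gT]| = (2 ^ k)%N -> ~ cyclically_separable adj.
Proof.
move=> cG /sep_pairs [a1 [a2 [a3 [b1 [b2 [b3 [ua ub inc]]]]]]].
have := inc a1 b1; rewrite !inE !eqxx => /(_ isT isT).
have dv (g : gT) : #[g] %| (2 ^ k)%N by rewrite -cG (order_dvdG (G := [set: gT]%G)) ?inE.
case/dvdn_pfactor: (dv a1) => // i _ ->; case/dvdn_pfactor: (dv b1) => // j _ ->.
rewrite /incmp => /andP[h1 h2]; case/orP: (leq_total i j) => h; [case/negP: h1 | case/negP: h2]; exact: dvdn_exp2l.
Qed.

Lemma gen_tri g d j : #[g] = d -> coprime d j -> 1 < j -> j.+1 < d ->
  [/\ #[g ^+ j] = d, #[g^-1] = d &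
   [&& adj g (g ^+ j), adj (g ^+ j) g^-1 & adj g^-1 g]].
Proof.
move=> og cj j1 jd.
have oj : #[g ^+ j] = d by rewrite orderXgcd og (eqP cj) divn1.
have oV : #[g^-1] = d by rewrite orderV.
split=> //; rewrite /order_supergraph /= oj oV og dvdnn !orbT !andbT.
have d2 : 2 < d by apply: ltn_trans jd.
apply/and3P; split.
- rewrite -{1}(expg1 g) eq_expg_mod_order og !modn_small ?(ltnW jd) ?(ltn_trans _ d2) //.
  by rewrite neq_ltn j1.
- rewrite eq_sym eq_invg_mul -expgS -order_dvdn og.
  by apply/negP => /(dvdn_leq (ltn0Sn _)); rewrite leqNgt jd.
- rewrite eq_invg_mul -(expgS g 1) -order_dvdn og.
  by apply/negP => /(dvdn_leq (ltn0Sn _)); rewrite leqNgt d2.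
Qed.

Lemma refl_tri : [/\ #[y] = 2, #[x * y] = 2, #[x ^+ 2 * y] = 2 &
   [&& adj y (x * y), adj (x * y) (x ^+ 2 * y) & adj (x ^+ 2 * y) y]].
Proof.
have o0 : #[y] = 2 by [].
have o1 : #[x * y] = 2 by apply: refl_ord; rewrite cycle_id.
have o2 : #[x ^+ 2 * y] = 2 by apply: refl_ord; rewrite mem_cycle.
split=> //; rewrite /order_supergraph /= o0 o1 o2 dvdnn !andbT.
have ne i j : i < j < n -> x ^+ i * y != x ^+ j * y.
  case/andP=> ij jn; rewrite (can_eq (mulgK y)) eq_expg_mod_order ox.
  by rewrite !modn_small ?(ltn_trans ij) // neq_ltn ij.
apply/and3P; split.
- by rewrite -{1}(mul1g y) -(expg0 x) -{2}(expg1 x) ne // (ltn_trans _ n_gt2).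
- by rewrite -{1}(expg1 x) ne.
- by rewrite eq_sym -{1}(mul1g y) -(expg0 x) ne // (ltn_trans _ n_gt2).
Qed.

Lemma sep_odd d : odd d -> 5 <= d -> d %| n -> cyclically_separable adj.
Proof.
move=> od d5 /dvdnP [e de].
have e0 : 0 < e by rewrite lt0n; apply/eqP => e0; move: n_gt2; rewrite de e0.
have og : #[x ^+ e] = d by rewrite orderXdiv ox de ?dvdn_mulr // mulKn.
have cop : coprime d 2 by rewrite coprimen2.
have [oj oV /and3P[f1 f2 f3]] := gen_tri og cop isT (ltnW d5).
have [o0 o1 o2 /and3P[e1 e2 e3]] := refl_tri.
apply: (sep_crit (P := pred1 2) (Q := pred1 d) _ _ _ _ _ _ _ e1 e2 e3 f1 f2 f3);
  rewrite /= ?o0 ?o1 ?o2 ?og ?oj ?oV ?eqxx //.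
move=> p q /eqP -> /eqP ->; rewrite dvdn2 od /=.
by apply/negP => /(dvdn_leq (ltn0Sn _)); rewrite leqNgt (leq_trans _ d5).
Qed.

Lemma sep_32 k : 2 <= k -> n = (3 * 2 ^ k.+1)%N -> cyclically_separable adj.
Proof.
move=> k2 nk.
have og : #[x ^+ 3] = (2 ^ k.+1)%N by rewrite orderXdiv ox nk ?dvdn_mulr // mulKn.
have big : 4 < (2 ^ k.+1)%N.
  by rewrite (@leq_trans (2 ^ 3)%N) // leq_exp2l.
have cop : coprime (2 ^ k.+1) 3 by rewrite coprimeXl.
have [oj oV /and3P[e1 e2 e3]] := gen_tri og cop isT big.
have oh : #[x ^+ (2 ^ k.+1)%N] = 3 by rewrite orderXdiv ox nk ?dvdn_mull // mulnK ?expn_gt0.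
have ow : #[x ^+ (2 ^ k)%N] = 6.
  by rewrite orderXdiv ox nk expnS mulnA ?dvdn_mull // mulnK ?expn_gt0.
have ohV : #[(x ^+ (2 ^ k.+1)%N)^-1] = 3 by rewrite orderV.
have f1 : adj (x ^+ (2 ^ k.+1)%N) (x ^+ (2 ^ k.+1)%N)^-1.
  rewrite /order_supergraph /= oh ohV dvdnn andbT eq_sym eq_invg_mul -(expgS _ 1).
  by rewrite -order_dvdn oh.
have f2 : adj (x ^+ (2 ^ k.+1)%N)^-1 (x ^+ (2 ^ k)%N).
  rewrite /order_supergraph /= ohV ow andbT; apply/eqP => h.
  by move: ohV; rewrite h ow.
have f3 : adj (x ^+ (2 ^ k)%N) (x ^+ (2 ^ k.+1)%N).
  rewrite /order_supergraph /= oh ow orbT andbT; apply/eqP => h.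
  by move: ow; rewrite h oh.
apply: (sep_crit (P := pred1 (2 ^ k.+1)%N) (Q := fun q => (q == 3) || (q == 6))
          _ _ _ _ _ _ _ e1 e2 e3 f1 f2 f3);
  rewrite /= ?og ?oj ?oV ?oh ?ohV ?ow ?eqxx ?orbT //.
have n3 m : (3 %| (2 ^ m)%N) = false by rewrite Euclid_dvdX.
move=> p q /eqP -> /orP[]/eqP ->; rewrite /incmp.
  rewrite n3 andbT; apply/negP => /(dvdn_leq (ltn0Sn _)); rewrite leqNgt.
  by rewrite (@ltn_trans 4).
apply/andP; split; last first.
  by apply/negP => h; move: (n3 k.+1); rewrite (@dvdn_trans 6).
apply/negP => /(dvdn_leq (ltn0Sn _)); rewrite leqNgt.
by rewrite (@leq_trans (2 ^ 3)%N) // leq_exp2l.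
Qed.

End Dih.


Local Open Scope group_scope.
Lemma dih_gens n : 1 < n -> exists x y : 'D_(n.*2),
  [/\ #[x] = n, #[y] = 2, x ^ y = x^-1, y \notin <[x]>
    & <[x]> * <[y]> = [set: 'D_(n.*2)]].
Proof.
move=> n_gt1.
have := isog_refl ('D_(n.*2))%G.
case/(isoGrpP _ (Grp_dihedral n_gt1)) => oG.
case/existsP=> -[x y] /= /eqP[defG xq y2 xy].
have{} defG: <[x]> * <[y]> = [set: 'D_(n.*2)].
  by rewrite -norm_joinEr // ?norms_cycle ?xy ?groupV ?cycle_id.
have ltqm : n < n.*2 by rewrite -addnn -{1}(addn0 n) ltn_add2l ltnW.
have notXy: y \notin <[x]>.
  apply: contraL ltqm => Xy; rewrite -leqNgt -(card_dihedral n_gt1) -defG mulGSid ?cycle_subG //.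
  by rewrite dvdn_leq ?(ltnW n_gt1) // order_dvdn xq.
have oy: #[y] = 2 by apply: nt_prime_order (group1_contra notXy).
have ox: #[x] = n.
  apply: double_inj; rewrite -muln2 -oy.
  transitivity #|[set: 'D_(n.*2)]|; last exact: card_dihedral.
  rewrite -defG TI_cardMg -?orderE //.
  by rewrite setIC prime_TIg ?cycle_subG // -orderE oy.
by exists x, y.
Qed.

Local Close Scope group_scope.

Lemma odd_decomp n : 0 < n -> exists k o, odd o /\ n = (2 ^ k * o)%N.
Proof.
elim/ltn_ind: n => n IH n0.
case on: (odd n); first by exists 0, n; rewrite mul1n.
have n2 : n = (n./2).*2 by rewrite -{1}(odd_double_half n) on.
have h0 : 0 < n./2 by rewrite -double_gt0 -n2.
have lt : n./2 < n by rewrite {2}n2 -addnn -[X in X < _]addn0 ltn_add2l.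
have [k [o [oo ko]]] := IH n./2 lt h0.
by exists k.+1, o; rewrite n2 ko expnS -mul2n mulnA.
Qed.

Theorem mainTheorem1 (n : nat) (hn : 3 <= n) :
  cyclically_separable (@order_supergraph ('D_(n.*2))%type) <->
  [/\ ~ (exists k, n = 2 ^ k), 5 <= n & (n != 6) && (n != 12)].
Proof.
have n1 : 1 < n by apply: ltnW.
have [x [y [ox oy xy notXy defG]]] := dih_gens n1.
have cG : #|[set: 'D_(n.*2)]| = n.*2 := card_dihedral n1.
split.
- move=> sep.
  have np2 : ~ exists k, n = 2 ^ k.
    case=> k nk; apply: (not_sep2 (k := k.+1)) sep.
    by rewrite cG nk -muln2 expnSr.
  have n12 : ~ n %| 12 by move=> h; exact: (not_sep12 ox oy xy notXy defG h sep).
  split=> //.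
  + rewrite ltnNge; apply/negP => h.
    have : (n == 3) || (n == 4) by move: hn h; case: (n) => [|[|[|[|[|]]]]].
    case/orP=> /eqP e; [apply: n12 | apply: np2; exists 2]; rewrite e //.
  + by apply/andP; split; apply/eqP => e; apply: n12; rewrite e.
- case=> np2 n5 /andP[n6 n12].
  have [k [o [oo nko]]] := odd_decomp (ltnW n1 : 0 < n).
  have o1 : o != 1 by apply/eqP => e; apply: np2; exists k; rewrite nko e muln1.
  case: (ltnP 4 o) => o5.
    by apply: (sep_odd hn ox oy xy notXy oo o5); rewrite nko dvdn_mull.
  have o3 : o = 3 by move: o5 oo o1; case: (o) => [|[|[|[|[|]]]]].
  case: k nko => [|[|[|k]]] nko.
  + by move: n5; rewrite nko o3.
  + by move: n6; rewrite nko o3.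
  + by move: n12; rewrite nko o3.
  + by apply: (sep_32 (k := k.+2) ox) => //; rewrite nko o3 mulnC.
Qed.
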